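(* Let $X$ be a Polish space with a complete metric and a countable basis $\mathcal O$, and let $I$ be a $\sigma$-ideal on $X$. Then the ideal $J_I$ is weakly selective: for every $J_I$-positive set $a\subseteq\mathcal O$ and every function $f:a\to\omega$, there is a $J_I$-positive $b\subseteq a$ such that $f\restriction b$ is constant or injective.
   Context: For $a\subseteq\mathcal O$, $\mathrm{cl}(a)=\{x\in X:\forall\varepsilon>0\ \exists O\in a\ O\subseteq B_\varepsilon(x)\}$, where $B_\varepsilon(x)$ is the open ball of radius $\varepsilon$ around $x$. $J_I=\{a\subseteq\mathcal O:\mathrm{cl}(a)\in I\}$; $a$ is $J_I$-positive if $a\notin J_I$. *)

(* Defs.v *)
From Stdlib Require Import Reals Classical.
Open Scope R_scope.

Definition set (X : Type) := X -> Prop.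

Section Defs.
Variable X : Type.
Variable d : X -> X -> R.

Definition is_metric : Prop :=
  (forall x y, 0 <= d x y) /\
  (forall x y, d x y = 0 <-> x = y) /\
  (forall x y, d x y = d y x) /\
  (forall x y z, d x z <= d x y + d y z).

Definition cauchy (u : nat -> X) : Prop :=
  forall eps, 0 < eps -> exists N, forall m n, (N <= m)%nat -> (N <= n)%nat -> d (u m) (u n) < eps.

Definition converges_to (u : nat -> X) (l : X) : Prop :=
  forall eps, 0 < eps -> exists N, forall n, (N <= n)%nat -> d (u n) l < eps.

Definition complete_metric : Prop :=
  forall u, cauchy u -> exists l, converges_to u l.

Definition ball (x : X) (eps : R) : set X := fun y => d x y < eps.

Definition is_open (U : set X) : Prop :=
  forall x, U x -> exists eps, 0 < eps /\ forall y, ball x eps y -> U y.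

Definition countable_family (O : set (set X)) : Prop :=
  exists e : nat -> set X, forall S, O S -> exists n, e n = S.

Definition countable_basis (O : set (set X)) : Prop :=
  countable_family O /\
  (forall S, O S -> is_open S) /\
  (forall U x, is_open U -> U x -> exists S, O S /\ S x /\ forall y, S y -> U y).

Definition sigma_ideal (I : set (set X)) : Prop :=
  I (fun _ => False) /\
  (forall A B : set X, I B -> (forall x, A x -> B x) -> I A) /\
  (forall A : nat -> set X, (forall n, I (A n)) -> I (fun x => exists n, A n x)).

Definition cl (a : set (set X)) : set X :=
  fun x => forall eps, 0 < eps -> exists S, a S /\ forall y, S y -> ball x eps y.

Definition J_I (I : set (set X)) (a : set (set X)) : Prop := I (cl a).

(* weak selectivity of J_I on the family O: functions f : a -> omega are
   represented by total functions on sets, only their restriction to a matters *)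
Definition weakly_selective (O : set (set X)) (J : set (set (set X))) : Prop :=
  forall a : set (set X), (forall S, a S -> O S) -> ~ J a ->
  forall f : set X -> nat,
    exists b : set (set X), (forall S, b S -> a S) /\ ~ J b /\
      ((exists n, forall S, b S -> f S = n) \/
       (forall S T, b S -> b T -> f S = f T -> S = T)).
End Defs.

(* Main.v *)
Require Import Defs.
From Stdlib Require Import Reals Classical.
From Stdlib Require Import ClassicalEpsilon List Lra Lia.
Open Scope R_scope.

Section Proof.
Variable X : Type.
Variable d : X -> X -> R.
Hypothesis Hm : is_metric X d.

Lemma ball_open (x : X) eps : is_open X d (ball X d x eps).
Proof.
  destruct Hm as [H0 [H1 [H2 H3]]].
  intros y Hy. unfold ball in *. exists (eps - d x y). split; [lra|].
  intros z Hz. unfold ball in Hz. specialize (H3 x y z). lra.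
Qed.

Variable a : set (set X).
Variable f : set X -> nat.
Variable x : X.
Hypothesis Hfib : forall n, ~ cl X d (fun S => a S /\ f S = n) x.

Lemma fib_delta (L : list nat) : exists delta, 0 < delta /\
  forall S, a S -> (forall y, S y -> ball X d x delta y) -> ~ In (f S) L.
Proof.
  induction L as [|n L IH].
  - exists 1. split; [lra|]. intros S _ _ H; inversion H.
  - destruct IH as [dl [Hdl HL]].
    assert (Hn := Hfib n). unfold cl in Hn.
    apply not_all_ex_not in Hn as [en Hen].
    apply imply_to_and in Hen as [Hen1 Hen2].
    exists (Rmin dl en). split; [apply Rmin_glb_lt; auto|].
    intros S HS Hb Hin. destruct Hin as [Heq|Hin].
    + apply Hen2. exists S. split; [split; auto|].
      intros y Hy. specialize (Hb y Hy). unfold ball in *.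
      pose proof (Rmin_r dl en). lra.
    + apply (HL S HS); auto. intros y Hy. specialize (Hb y Hy). unfold ball in *.
      pose proof (Rmin_l dl en). lra.
Qed.
End Proof.

Theorem proposition4p2 (X : Type) (d : X -> X -> R) (O : set (set X)) (I : set (set X)) :
  is_metric X d -> complete_metric X d -> countable_basis X d O ->
  sigma_ideal X I ->
  weakly_selective X O (J_I X d I).
Proof.
  intros Hm _ [[e He] [Hopen Hbas]] [Iempty [Imono Iunion]].
  intros a HaO Ha f.
  destruct (classic (exists n, ~ J_I X d I (fun S => a S /\ f S = n))) as [[n Hn]|Hno].
  { exists (fun S => a S /\ f S = n). split; [tauto|]. split; [auto|].
    left. exists n. tauto. }
  assert (Hall : forall n, I (cl X d (fun S => a S /\ f S = n))).
  { intros n. apply NNPP. intro H. apply Hno. exists n. exact H. }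
  set (P := fun (i : nat) (L : list nat) (S : set X) =>
              a S /\ (forall y, S y -> e i y) /\ ~ In (f S) L).
  set (inh := inhabits (fun _ : X => False)).
  set (c := fun i L => epsilon inh (P i L)).
  set (used := fix used (i : nat) : list nat :=
         match i with O => nil | S i => f (c i (used i)) :: used i end).
  set (b := fun S => exists i, P i (used i) (c i (used i)) /\ S = c i (used i)).
  assert (Hused : forall i j, (i < j)%nat -> In (f (c i (used i))) (used j)).
  { intros i j Hij. induction j as [|j IH]; [lia|].
    simpl. destruct (Nat.eq_dec i j) as [->|Hne]; [left; reflexivity|].
    right. apply IH. lia. }
  exists b. split.
  { intros S [i [[HS _] ->]]. exact HS. }
  split.
  2:{ right. intros S T [i [[_ [_ Hi]] ->]] [j [[_ [_ Hj]] ->]] Hf.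
      destruct (Nat.lt_trichotomy i j) as [Hlt|[->|Hlt]]; [|reflexivity|].
      - exfalso. apply Hj. rewrite <- Hf. apply Hused; auto.
      - exfalso. apply Hi. rewrite Hf. apply Hused; auto. }
  intro Hb. apply Ha. unfold J_I in *.
  set (A := fun k : nat => match k with O => cl X d b
             | _ => (fun x => exists n, cl X d (fun S => a S /\ f S = n) x) end).
  apply (Imono _ (fun x => exists n, A n x)).
  { apply Iunion. intros [|k]; simpl; auto. }
  intros x Hx.
  destruct (classic (exists n, cl X d (fun S => a S /\ f S = n) x)) as [Hu|Hu].
  { exists 1%nat. exact Hu. }
  exists 0%nat. simpl.
  assert (Hfib : forall n, ~ cl X d (fun S => a S /\ f S = n) x).
  { intros n Hn. apply Hu. exists n. exact Hn. }
  intros eps Heps.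
  destruct (Hbas (ball X d x eps) x (ball_open X d Hm x eps)) as [S0 [HS0 [HxS0 HS0b]]].
  { unfold ball. destruct Hm as [_ [H1 _]]. rewrite (proj2 (H1 x x) eq_refl). exact Heps. }
  destruct (He S0 HS0) as [i Hi]. subst S0.
  destruct (Hopen _ HS0 x HxS0) as [d0 [Hd0 Hd0b]].
  destruct (fib_delta X d a f x Hfib (used i)) as [dl [Hdl HL]].
  destruct (Hx (Rmin d0 dl) (Rmin_glb_lt _ _ _ Hd0 Hdl)) as [S [HaS HSb]].
  assert (HP : P i (used i) (c i (used i))).
  { unfold c. apply epsilon_spec. exists S. split; [exact HaS|]. split.
    - intros y Hy. apply Hd0b. specialize (HSb y Hy). unfold ball in *.
      pose proof (Rmin_l d0 dl). lra.
    - apply HL; auto. intros y Hy. specialize (HSb y Hy). unfold ball in *.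
      pose proof (Rmin_r d0 dl). lra. }
  exists (c i (used i)). split.
  - exists i. split; auto.
  - intros y Hy. apply HS0b. destruct HP as [_ [Hsub _]]. apply Hsub. exact Hy.
Qed.
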